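(* Let $m\in\mathbb{N}$ be odd and write $m=2k+1$. Then the friendship graph $F_{\lfloor m/2\rfloor}=F_k$ is $\mathbb{Z}_m$-cordial.
   Context: Graphs are finite, simple and undirected. For $n\in\mathbb{N}$, the friendship graph $F_n$ is the union of $n$ copies of the triangle $C_3$ joined at a single common (central) vertex. For an abelian group $A$ and a graph $G=(V,E)$, a vertex labeling $\ell:V\to A$ induces an edge labeling $\ell(\{v_1,v_2\})=\ell(v_1)+\ell(v_2)$. Let $f_V(a)=|\{v\in V:\ell(v)=a\}|$ and $f_E(a)=|\{e\in E:\ell(e)=a\}|$. The labeling is $A$-cordial if $|f_V(a_1)-f_V(a_2)|\le 1$ and $|f_E(a_1)-f_E(a_2)|\le 1$ for all $a_1,a_2\in A$; $G$ is $A$-cordial if it admits an $A$-cordial labeling. *)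

(* Defs.v *)
From mathcomp Require Import all_boot all_order all_algebra.
Set Implicit Arguments. Unset Strict Implicit. Unset Printing Implicit Defensive.
Import GRing.Theory.
Local Open Scope ring_scope.

Record sgraph := SGraph {
  vert :> finType;
  adj : rel vert;
  adj_sym : symmetric adj;
  adj_irr : irreflexive adj }.

(* Edges are unordered pairs {x,y}; we represent each edge once by the
   ordered pair (x,y) with enum_rank x < enum_rank y. *)
Definition edges (G : sgraph) : {set G * G} :=
  [set p | adj p.1 p.2 && (enum_rank p.1 < enum_rank p.2)%N].

Definition fV (G : sgraph) (A : finZmodType) (l : G -> A) (a : A) : nat :=
  #|[set v : G | l v == a]|.
Definition fE (G : sgraph) (A : finZmodType) (l : G -> A) (a : A) : nat :=
  #|[set p in edges G | l p.1 + l p.2 == a]|.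

Definition cordial_labeling (G : sgraph) (A : finZmodType) (l : G -> A) :=
  forall a1 a2 : A,
    (fV l a1 <= (fV l a2).+1)%N /\ (fE l a1 <= (fE l a2).+1)%N.

Definition A_cordial (A : finZmodType) (G : sgraph) :=
  exists l : G -> A, cordial_labeling l.

(* Friendship graph F_n: central vertex None, and triangle i consists of
   None, Some (i,false), Some (i,true). *)
Definition fr_adj (n : nat) : rel (option ('I_n * bool)) :=
  fun x y => match x, y with
  | None, None => false
  | None, Some _ | Some _, None => true
  | Some (i, b), Some (j, c) => (i == j) && (b != c)
  end.

Lemma fr_adj_sym n : symmetric (@fr_adj n).
Proof.
move=> [[i b]|] [[j c]|] //=; by rewrite (eq_sym i) (eq_sym b).
Qed.

Lemma fr_adj_irr n : irreflexive (@fr_adj n).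
Proof. by move=> [[i b]|] //=; rewrite !eqxx. Qed.

Definition friendship (n : nat) : sgraph :=
  SGraph (@fr_adj_sym n) (@fr_adj_irr n).

(* Main.v *)
Require Import Defs.
From mathcomp Require Import all_boot all_order all_algebra zify.
Import GRing.Theory.

Lemma valD n (x y : 'I_n.+1) : val (x + y)%R = (val x + val y) %% n.+1.
Proof. by []. Qed.

Lemma mod2 x m : x < m.*2 -> (x %% m = x /\ x < m) \/ (x %% m = x - m /\ m <= x).
Proof.
case: (ltnP x m) => h1 h2; first by left; rewrite modn_small.
right; split=> //.
have -> : x = (x - m) + m by rewrite subnK.
by rewrite modnDr modn_small ?addnK //; lia.
Qed.

Definition vv k (v : option ('I_k * bool)) : nat :=
  match v with
  | None => 0
  | Some (i, false) => i.+1
  | Some (i, true) => if i.+1 == k then k.+1 else i + k.+2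
  end.

Arguments vv {k} v.

Definition lab k (v : friendship k) : 'I_(k.*2.+1) := inord (vv v).
Arguments lab {k} v.

Lemma vv_le k (v : option ('I_k * bool)) : vv v <= k.*2.
Proof.
case: v => [[[i hi] [|]]|] //=; try case: eqP => /=; lia.
Qed.

Lemma val_lab k (v : friendship k) : val (lab v) = vv v.
Proof. by apply: inordK; rewrite ltnS vv_le. Qed.

Lemma vv_inj k : injective (@vv k).
Proof.
move=> [[[i hi] [|]]|] [[[j hj] [|]]|] //=; rewrite ?eqSS;
  repeat case: eqP => /= ?; move=> h; try lia.
all: have ? : i = j by lia.
all: subst j; by rewrite (bool_irrelevance hi hj).
Qed.

Lemma lab_inj k : injective (@lab k).
Proof. move=> x y /(congr1 val); rewrite !val_lab; exact: vv_inj. Qed.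

Lemma lab_bij k : bijective (@lab k).
Proof.
apply: inj_card_bij; first exact: lab_inj.
rewrite /= card_option card_prod card_bool !card_ord; lia.
Qed.

Lemma fV_lab k a : fV (@lab k) a = 1.
Proof.
have [g labK gK] := lab_bij k.
rewrite /fV (_ : [set v | lab v == a] = [set g a]) ?cards1 //.
apply/setP => v; rewrite !inE; apply/eqP/eqP => [<-|->] //; by rewrite labK.
Qed.

Lemma lab_None k : lab (None : friendship k) = 0%R.
Proof. by apply: val_inj; rewrite val_lab. Qed.

Definition ord2 (T : finType) (p : T * T) :=
  if enum_rank p.1 < enum_rank p.2 then p else (p.2, p.1).
Arguments ord2 {T} p.

Lemma ord2_lt (T : finType) (x y : T) : enum_rank x < enum_rank y ->
  ord2 (x, y) = (x, y) /\ ord2 (y, x) = (x, y).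
Proof. by rewrite /ord2 /= => h; rewrite h ltnNge ltnW. Qed.
Arguments ord2_lt {T x y}.

Lemma ord2_cases (T : finType) (p : T * T) : ord2 p = p \/ ord2 p = (p.2, p.1).
Proof. by rewrite /ord2; case: ifP; [left|right]. Qed.
Arguments ord2_cases {T} p.

Lemma ord2_rank (T : finType) (x y : T) : x != y ->
  enum_rank (ord2 (x, y)).1 < enum_rank (ord2 (x, y)).2.
Proof.
move=> hxy; rewrite /ord2 /=; case: (ltnP (enum_rank x) (enum_rank y)) => //= h.
have : enum_rank y != enum_rank x.
  by apply/negP => /eqP/enum_rank_inj e; rewrite e eqxx in hxy.
move: h; rewrite -!(inj_eq val_inj) /=; lia.
Qed.
Arguments ord2_rank {T x y}.

Definition ET k := (('I_k * bool) + 'I_k)%type.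
Definition ends k (t : ET k) : friendship k * friendship k :=
  match t with
  | inl v => (None, Some v)
  | inr i => (Some (i, false), Some (i, true))
  end.
Arguments ends {k} t.

Lemma ends_adj k t : adj (@ends k t).1 (ends t).2.
Proof. by case: t => [v|i] //=; rewrite eqxx. Qed.

Lemma ends_neq k t : (@ends k t).1 != (ends t).2.
Proof. case: t => [v|i] //=; apply/eqP => h; by have := congr1 (omap snd) h. Qed.

Lemma edges_eq k : edges (friendship k) = [set ord2 (ends t) | t : ET k].
Proof.
apply/setP => p; rewrite /edges inE; apply/andP/imsetP => [[ha hr]|[t _ ->]].
- case: p ha hr => x y /= ha hr.
  have [e1 e2] := ord2_lt hr.
  move: ha hr e1 e2; case: x => [[i b]|]; case: y => [[j c]|] //=.
  + case/andP => /eqP <- hbc _ e1 e2; exists (inr i) => //=.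
    by case: b c hbc e1 e2 => [] [].
  + by move=> _ _ e1 e2; exists (inl (i, b)).
  + by move=> _ _ e1 e2; exists (inl (j, c)).
- split.
  + case: (ord2_cases (ends t)) => ->; first exact: ends_adj.
    rewrite /= fr_adj_sym; exact: ends_adj.
  + have := ord2_rank (@ends_neq k t); by rewrite -surjective_pairing.
Qed.

Lemma ord2_inj k : injective (fun t : ET k => ord2 (ends t)).
Proof.
move=> t1 t2 /=.
case: (ord2_cases (ends t1)) => ->; case: (ord2_cases (ends t2)) => ->;
case: t1 => [v1|i1]; case: t2 => [v2|i2] //=; by case=> *; subst.
Qed.

Lemma fE_eq k a : fE (@lab k) a =
  #|[set t : ET k | (lab (ends t).1 + lab (ends t).2 == a)%R]|.
Proof.
rewrite /fE edges_eq.
have -> : [set p in [set ord2 (ends t) | t : ET k] | (lab p.1 + lab p.2 == a)%R]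
  = [set ord2 (ends t) | t in [set t : ET k | (lab (ends t).1 + lab (ends t).2 == a)%R]].
  apply/setP => p; apply/idP/imsetP.
  - rewrite inE => /andP [/imsetP [t _ ->] h]; exists t => //; rewrite inE.
    by case: (ord2_cases (ends t)) h => -> //=; rewrite addrC.
  - case=> t; rewrite inE => h ->; rewrite inE; apply/andP; split.
      by apply: imset_f.
    by case: (ord2_cases (ends t)) => -> //=; rewrite addrC.
by rewrite card_imset //; exact: ord2_inj.
Qed.

Lemma card_ET k (P : pred (ET k)) :
  #|[set t | P t]| = #|[set v | P (inl v)]| + #|[set i | P (inr i)]|.
Proof. by rewrite -!sum1dep_card big_sumType. Qed.

Lemma cc k a : #|[set v : 'I_k * bool | @lab k (Some v) == a]| = (a != 0%R).
Proof.
have [g labK gK] := lab_bij k.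
case e: (g a) => [v|].
- have ha : a = lab (Some v) by rewrite -e gK.
  rewrite (_ : [set _ | _] = [set v]) ?cards1.
    by rewrite ha -(lab_None k) (inj_eq (@lab_inj k)).
  apply/setP => w; rewrite !inE ha (inj_eq (@lab_inj k)).
  by apply/eqP/eqP => [[]|->].
- have ha : a = lab None by rewrite -e gK.
  rewrite ha lab_None eqxx; apply/eqP; rewrite cards_eq0; apply/eqP/setP => w.
  by rewrite !inE -lab_None (inj_eq (@lab_inj k)).
Qed.

Definition sg k (i : 'I_k) : nat := vv (Some (i, false)) + vv (Some (i, true)).
Arguments sg {k} i.

Lemma sg_eq k (i : 'I_k) a :
  ((@lab k (Some (i, false)) + lab (Some (i, true)) == a)%R) = (sg i %% k.*2.+1 == val a).
Proof. by rewrite -(inj_eq val_inj) valD !val_lab. Qed.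

Lemma sgB k (i : 'I_k) : sg i %% k.*2.+1 = 0 -> (i.+1 == k) || ((i.+1).*2 == k).
Proof.
rewrite /sg /=; case: eqP => h /=; first by [].
have hi := ltn_ord i.
have := @mod2 (i.+1 + (i + k.+2)) k.*2.+1; lia.
Qed.

Lemma sgA k (i j : 'I_k) : sg i %% k.*2.+1 = sg j %% k.*2.+1 ->
  sg i %% k.*2.+1 != 0 -> i = j.
Proof.
move=> e nz; apply: val_inj; move: e nz; rewrite /sg /=.
have hi := ltn_ord i; have hj := ltn_ord j.
case: eqP => h1; case: eqP => h2 /=.
- lia.
- have z : (i.+1 + k.+1) %% k.*2.+1 = 0.
    by rewrite (_ : i.+1 + k.+1 = k.*2.+1) ?modnn //; lia.
  rewrite z; lia.
- have z : (j.+1 + k.+1) %% k.*2.+1 = 0.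
    by rewrite (_ : j.+1 + k.+1 = k.*2.+1) ?modnn //; lia.
  rewrite z; lia.
- have := @mod2 (i.+1 + (i + k.+2)) k.*2.+1.
  have := @mod2 (j.+1 + (j + k.+2)) k.*2.+1; lia.
Qed.

Lemma card_uniq (T : finType) (A : {set T}) :
  (forall x y, x \in A -> y \in A -> x = y) -> #|A| <= 1.
Proof.
move=> h; apply/card_le1P => x xA y; rewrite inE; apply/idP/eqP => [yA|->//].
exact: h.
Qed.

Lemma fE_val k a : fE (@lab k) a =
  (a != 0%R) + #|[set i : 'I_k | sg i %% k.*2.+1 == val a]|.
Proof.
rewrite fE_eq card_ET -(cc k a); congr (_ + _); apply: eq_card => x;
  by rewrite !inE /= ?lab_None ?add0r ?sg_eq.
Qed.

Lemma fE_bnd k a : 0 < k -> 0 < fE (@lab k) a <= 2.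
Proof.
move=> k0; rewrite fE_val.
have [-> | nz] := eqVneq a 0%R.
- rewrite /=.
  set A := [set _ | _].
  have i0lt : k.-1 < k by lia.
  pose i0 : 'I_k := Ordinal i0lt.
  have h0 : i0 \in A.
    rewrite inE; apply/eqP; rewrite /sg /=.
    have -> : (k.-1.+1 == k) = true by apply/eqP; lia.
    rewrite (_ : k.-1.+1 + k.+1 = k.*2.+1) ?modnn //; lia.
  have -> /= : 0 < #|A| by apply/card_gt0P; exists i0.
  have sub : A \subset [set i : 'I_k | i.+1 == k] :|: [set i : 'I_k | (i.+1).*2 == k].
    apply/subsetP => i; rewrite !inE => /eqP /sgB; done.
  apply: leq_trans (subset_leq_card sub) _.
  apply: leq_trans (leq_card_setU _ _) _.
  have u1 : #|[set i : 'I_k | i.+1 == k]| <= 1.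
    by apply: card_uniq => x y; rewrite !inE => /eqP hx /eqP hy; apply: ord_inj; lia.
  have u2 : #|[set i : 'I_k | (i.+1).*2 == k]| <= 1.
    by apply: card_uniq => x y; rewrite !inE => /eqP hx /eqP hy; apply: ord_inj; lia.
  lia.
- rewrite /= add1n ltnS.
  apply: card_uniq => x y; rewrite !inE => /eqP hx /eqP hy.
  apply: sgA; first by rewrite hx hy.
  rewrite hx; apply: contra nz => /eqP h; apply/eqP; exact: val_inj.
Qed.

Theorem theorem11p1 (k : nat) :
  @A_cordial 'I_(k.*2.+1) (friendship k).
Proof.
case: (posnP k) => [->|k0].
  by exists (fun _ => ord0) => a1 a2; rewrite (ord1 a1) (ord1 a2) !leqnSn.
exists (@lab k) => a1 a2; rewrite !fV_lab; split=> //.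
case/andP: (fE_bnd k a1 k0) => _ h1; case/andP: (fE_bnd k a2 k0) => h2 _.
by apply: leq_trans h1 _.
Qed.
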